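(* Let $(\gamma_n)_{n\ge 0}$ be a sequence of positive reals satisfying conditions (C1)–(C7) below, and let $(p_n)$ be the associated symmetric orthonormal polynomials. Then for every $\omega\in\mathbb{R}$ the limits below exist and satisfy \[ \lim_{n\to\infty}\frac{\sum_{k=0}^n p_k^2(\omega)}{\sum_{k=0}^n \frac{1}{\gamma_k}}=\frac12\lim_{n\to\infty}\gamma_n\bigl(p_n^2(\omega)+p_{n+1}^2(\omega)\bigr), \] and the convergence of both limits is uniform on every compact subset of $\mathbb{R}$.
   Context: Given positive reals $\gamma_n>0$ ($n\ge 0$), set $\gamma_{-1}=1$, $p_{-1}(\omega)=0$, $p_0(\omega)=1$, and define polynomials by $\gamma_n p_{n+1}(\omega)=\omega p_n(\omega)-\gamma_{n-1}p_{n-1}(\omega)$ for $n\ge0$. Let $\Delta_n=\gamma_{n+1}-\gamma_n$ and $\Delta^2_n=\Delta_{n+1}-\Delta_n$. The conditions are: (C1) $\gamma_n\to\infty$; (C2) $\Delta_n\to 0$; (C3) there exist $n_0,m_0$ such that $\gamma_{n+m}>\gamma_n$ for all $n\ge n_0$, $m\ge m_0$; (C4) $\sum_{j\ge0}1/\gamma_j=\infty$; (C5) there exists $\kappa>1$ with $\sum_{j\ge0}\gamma_j^{-\kappa}<\infty$; (C6) $\sum_{n\ge0}|\Delta_n|/\gamma_n^2<\infty$; (C7) $\sum_{n\ge0}|\Delta^2_n|/\gamma_n<\infty$. *)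

(* Defs.v *)
From Stdlib Require Import Reals Lra Rtopology.
Open Scope R_scope.

(* gamma_{n-1} with the convention gamma_{-1} = 1 *)
Definition gprev (g : nat -> R) (n : nat) : R :=
  match n with O => 1 | S k => g k end.

(* ppair g w n = (p_{n-1}(w), p_n(w)), with p_{-1} = 0, p_0 = 1 and
   gamma_n p_{n+1} = w p_n - gamma_{n-1} p_{n-1}. *)
Fixpoint ppair (g : nat -> R) (w : R) (n : nat) : R * R :=
  match n with
  | O => (0, 1)
  | S k => let (a, b) := ppair g w k in
           (b, (w * b - gprev g k * a) / g k)
  end.

Definition p (g : nat -> R) (n : nat) (w : R) : R := snd (ppair g w n).

Definition Delta (g : nat -> R) (n : nat) : R := g (S n) - g n.
Definition Delta2 (g : nat -> R) (n : nat) : R := Delta g (S n) - Delta g n.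

Definition series_converges (a : nat -> R) : Prop :=
  exists l, Un_cv (fun N => sum_f_R0 a N) l.

Definition cond1 (g : nat -> R) : Prop := cv_infty g.
Definition cond2 (g : nat -> R) : Prop := Un_cv (Delta g) 0.
Definition cond3 (g : nat -> R) : Prop :=
  exists n0 m0 : nat, forall n m, (n0 <= n)%nat -> (m0 <= m)%nat -> g (n + m)%nat > g n.
Definition cond4 (g : nat -> R) : Prop := cv_infty (fun N => sum_f_R0 (fun j => / g j) N).
Definition cond5 (g : nat -> R) : Prop :=
  exists kappa, 1 < kappa /\ series_converges (fun j => Rpower (g j) (- kappa)).
Definition cond6 (g : nat -> R) : Prop :=
  series_converges (fun n => Rabs (Delta g n) / (g n) ^ 2).
Definition cond7 (g : nat -> R) : Prop :=
  series_converges (fun n => Rabs (Delta2 g n) / g n).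

Definition unif_cv_on (K : R -> Prop) (f : nat -> R -> R) (L : R -> R) : Prop :=
  forall eps, eps > 0 -> exists N : nat, forall n x, (N <= n)%nat -> K x ->
    Rabs (f n x - L x) < eps.

(* Main.v *)
Require Import Defs.
From Stdlib Require Import Reals Lra Lia Rtopology.
Open Scope R_scope.

Lemma fst_ppair g w k : fst (ppair g w (S k)) = p g k w.
Proof. unfold p; simpl; destruct (ppair g w k); reflexivity. Qed.

Lemma snd_ppair g w k :
  p g (S k) w = (w * p g k w - gprev g k * fst (ppair g w k)) / g k.
Proof. unfold p; simpl; destruct (ppair g w k); reflexivity. Qed.

Lemma p_0 g w : p g 0 w = 1.
Proof. reflexivity. Qed.

Lemma p_1 g w : p g 1 w = w / g 0%nat.
Proof. rewrite snd_ppair. simpl. unfold p; simpl. f_equal. ring. Qed.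

Lemma p_SS g w j :
  p g (S (S j)) w = (w * p g (S j) w - g j * p g j w) / g (S j).
Proof. rewrite snd_ppair, fst_ppair. reflexivity. Qed.

Lemma abs_between x M : Rabs x <= M -> -M <= x <= M.
Proof. unfold Rabs; destruct (Rcase_abs x); lra. Qed.

Lemma abs3 x y z : Rabs (x - y - z) <= Rabs x + Rabs y + Rabs z.
Proof. unfold Rabs; repeat destruct Rcase_abs; lra. Qed.

Lemma abs_ab a b : Rabs (a * b) <= (a^2 + b^2) / 2.
Proof. assert (0 <= (a-b)*(a-b)) by (apply Rle_0_sqr). assert (0 <= (a+b)*(a+b)) by (apply Rle_0_sqr). unfold Rabs; destruct Rcase_abs; simpl; lra. Qed.

Fixpoint psum (a : nat -> R) (m k : nat) : R :=
  match k with O => 0 | S k' => psum a m k' + a (m + k')%nat end.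

Definition TS (a : nat -> R) : Prop :=
  forall e, e > 0 -> exists N, forall m k, (N <= m)%nat -> psum a m k <= e.

Lemma psum_nonneg a m k : (forall n, 0 <= a n) -> 0 <= psum a m k.
Proof. intro H; induction k; simpl; [lra | specialize (H (m+k)%nat); lra]. Qed.

Lemma psum_split a m k : psum a m k = psum a 0 (m + k) - psum a 0 m.
Proof.
  induction k; simpl.
  - rewrite Nat.add_0_r; ring.
  - rewrite Nat.add_succ_r; simpl; rewrite IHk; ring.
Qed.

Lemma psum0_sum a n : psum a 0 (S n) = sum_f_R0 a n.
Proof. induction n; simpl in *; [ring | rewrite <- IHn; simpl; ring]. Qed.

Lemma TS_of_conv a : series_converges a -> TS a.
Proof.
  intros [l Hl] e He.
  destruct (Hl (e/2)) as [N HN]; [lra|].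
  exists (S N). intros m k Hm.
  destruct m as [|m']; [lia|].
  rewrite psum_split.
  replace (S m' + k)%nat with (S (m' + k)) by lia.
  rewrite !psum0_sum.
  assert (H1 := HN (m'+k)%nat ltac:(lia)).
  assert (H2 := HN m' ltac:(lia)).
  unfold R_dist in *. unfold Rabs in *; repeat destruct Rcase_abs; lra.
Qed.

Lemma TS_compare a b C j : TS a -> 0 <= C ->
  (exists N0, forall n, (N0 <= n)%nat -> 0 <= b n <= C * a (n + j)%nat) -> TS b.
Proof.
  intros Ha HC [N0 HN0] e He.
  destruct (Ha (e / (C+1))) as [N HN].
  { apply Rdiv_lt_0_compat; lra. }
  exists (Nat.max N N0). intros m k Hm.
  assert (Hb : psum b m k <= C * psum a (m + j) k).
  { induction k; simpl; [lra|].
    destruct (HN0 (m + k)%nat ltac:(lia)) as [_ H].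
    replace (m + k + j)%nat with (m + j + k)%nat in H by lia. lra. }
  assert (Hs := HN (m + j)%nat k ltac:(lia)).
  assert (C * psum a (m + j) k <= C * (e / (C+1))) by (apply Rmult_le_compat_l; lra).
  assert (C * (e / (C+1)) <= e).
  { unfold Rdiv. rewrite <- Rmult_assoc.
    apply (Rmult_le_reg_r (C+1)); [lra|].
    rewrite Rmult_assoc, Rinv_l by lra. nra. }
  lra.
Qed.

Lemma psum_plus a b m k : psum (fun n => a n + b n) m k = psum a m k + psum b m k.
Proof. induction k; simpl; [ring | rewrite IHk; ring]. Qed.

Lemma TS_plus a b : (forall n, 0 <= a n) -> (forall n, 0 <= b n) ->
  TS a -> TS b -> TS (fun n => a n + b n).
Proof.
  intros Pa Pb Ha Hb e He.
  destruct (Ha (e/2)) as [N1 H1]; [lra|].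
  destruct (Hb (e/2)) as [N2 H2]; [lra|].
  exists (Nat.max N1 N2). intros m k Hm. rewrite psum_plus.
  specialize (H1 m k ltac:(lia)); specialize (H2 m k ltac:(lia)); lra.
Qed.

Lemma prod_iter (V e : nat -> R) m :
  (forall n, 0 <= e n) ->
  (forall n, (m <= n)%nat -> 0 <= V n /\ Rabs (V (S n) - V n) <= e n * V n) ->
  forall k, psum e m k <= 1 ->
  V m * (1 - psum e m k) <= V (m + k)%nat /\ V (m + k)%nat * (1 - psum e m k) <= V m.
Proof.
  intros He HV k. induction k; intro Hs.
  - simpl. rewrite Nat.add_0_r. lra.
  - simpl in Hs |- *.
    assert (Hx := He (m+k)%nat).
    destruct (IHk ltac:(lra)) as [I1 I2].
    destruct (HV (m+k)%nat ltac:(lia)) as [Hv Hd].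
    destruct (HV m ltac:(lia)) as [Hv0 _].
    assert (Hs0 := psum_nonneg e m k He).
    rewrite Nat.add_succ_r.
    set (s := psum e m k) in *. set (x := e (m+k)%nat) in *.
    set (v := V (m+k)%nat) in *. set (v' := V (S (m+k))) in *. set (v0 := V m) in *.
    apply abs_between in Hd.
    split.
    + assert (v0 * (1 - s) * (1 - x) <= v * (1 - x)) by (apply Rmult_le_compat_r; lra).
      assert (0 <= v0 * (s * x)) by (apply Rmult_le_pos; [lra| apply Rmult_le_pos; lra]).
      nra.
    + assert (v' * (1 - (s + x)) <= v * (1 + x) * (1 - (s+x))) by (apply Rmult_le_compat_r; lra).
      assert (0 <= v * (x * (s + x))) by (apply Rmult_le_pos; [lra| apply Rmult_le_pos; lra]).
      nra.
Qed.


Lemma key_alg G0 G1 G2 w a b M :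
  0 <= M -> 0 < G1 -> 0 < G2 -> Rabs w <= M -> M + 2 * Rabs (G1 - G0) <= G1 ->
  Rabs (G2 - G1) <= 1 ->
  let c := (w * b - G1 * a) / G2 in
  let V := G1 * (a^2 + b^2) - w * a * b - (G1 - G0) * a^2 in
  let V' := G2 * (b^2 + c^2) - w * b * c - (G2 - G1) * b^2 in
  G1 / 2 * (a^2 + b^2) <= V /\
  Rabs (V' - V) <= (2 * Rabs ((G2 - G1) - (G1 - G0)) * / G1
                    + 2 * (1 + M) * Rabs (G2 - G1) * (/ G1 * / G2)) * V.
Proof.
  intros HM HG1 HG2 Hw HD HD1 c V V'.
  set (Q := a^2 + b^2).
  assert (Ha2 : 0 <= a^2) by (simpl; rewrite Rmult_1_r; apply Rle_0_sqr).
  assert (Hb2 : 0 <= b^2) by (simpl; rewrite Rmult_1_r; apply Rle_0_sqr).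
  assert (HQ : 0 <= Q) by (unfold Q; lra).
  assert (Hwab : Rabs (w * a * b) <= M * Q / 2).
  { rewrite Rmult_assoc, Rabs_mult.
    assert (H := abs_ab a b). assert (0 <= Rabs w) by apply Rabs_pos.
    assert (0 <= Rabs (a*b)) by apply Rabs_pos.
    assert (Rabs w * Rabs (a*b) <= M * Rabs (a*b)) by (apply Rmult_le_compat_r; lra).
    assert (M * Rabs (a*b) <= M * (Q/2)) by (apply Rmult_le_compat_l; unfold Q; lra).
    lra. }
  assert (HDa : Rabs ((G1 - G0) * a^2) <= Rabs (G1 - G0) * Q).
  { rewrite Rabs_mult, (Rabs_pos_eq (a^2)) by lra.
    apply Rmult_le_compat_l; [apply Rabs_pos | unfold Q; lra]. }
  assert (Hlow : G1 / 2 * Q <= V).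
  { unfold V. fold Q.
    apply abs_between in Hwab. apply abs_between in HDa.
    assert (0 <= (G1/2 - M/2 - Rabs (G1 - G0)) * Q) by (apply Rmult_le_pos; lra).
    lra. }
  split; [exact Hlow|].
  set (D1 := G2 - G1). set (D2 := (G2 - G1) - (G1 - G0)).
  assert (Hid : V' - V = - D2 * a^2 + D1 * (D1 * / G2 * a^2 + w * a * b * / G2)).
  { unfold V', V, c, D1, D2. field. lra. }
  rewrite Hid.
  assert (HiG2 : 0 < / G2) by (apply Rinv_0_lt_compat; lra).
  assert (HiG1 : 0 < / G1) by (apply Rinv_0_lt_compat; lra).
  assert (HD1p : 0 <= Rabs D1) by apply Rabs_pos.
  assert (HD2p : 0 <= Rabs D2) by apply Rabs_pos.
  assert (Hb1 : Rabs (- D2 * a^2 + D1 * (D1 * / G2 * a^2 + w * a * b * / G2))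
              <= Rabs D2 * Q + (1 + M) * Rabs D1 * / G2 * Q).
  { eapply Rle_trans; [apply Rabs_triang|].
    rewrite Rabs_mult, Rabs_Ropp, (Rabs_pos_eq (a^2)) by lra.
    rewrite Rabs_mult.
    assert (Rabs D2 * a^2 <= Rabs D2 * Q) by (apply Rmult_le_compat_l; unfold Q; lra).
    assert (Rabs (D1 * / G2 * a^2 + w * a * b * / G2) <= (1 + M) * / G2 * Q).
    { eapply Rle_trans; [apply Rabs_triang|].
      rewrite !Rabs_mult, (Rabs_pos_eq (/G2)), (Rabs_pos_eq (a^2)) by lra.
      assert (Rabs D1 * / G2 * a^2 <= 1 * / G2 * Q).
      { apply Rmult_le_compat; [apply Rmult_le_pos; lra| lra | | unfold Q; lra].
        apply Rmult_le_compat_r; unfold D1; lra. }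
      assert (Rabs w * Rabs a * Rabs b * / G2 <= M * Q * / G2).
      { apply Rmult_le_compat_r; [lra|].
        rewrite <- !Rabs_mult. assert (0 <= M * Q) by (apply Rmult_le_pos; lra). lra. }
      nra. }
    assert (Rabs D1 * Rabs (D1 * / G2 * a^2 + w * a * b * / G2) <= Rabs D1 * ((1 + M) * / G2 * Q))
      by (apply Rmult_le_compat_l; lra).
    lra. }
  eapply Rle_trans; [exact Hb1|].
  set (X := Rabs D2 + (1 + M) * Rabs D1 * / G2).
  assert (HX : 0 <= X) by (unfold X; assert (0 <= (1+M) * Rabs D1 * / G2) by (apply Rmult_le_pos; [apply Rmult_le_pos|]; lra); lra).
  replace (Rabs D2 * Q + (1 + M) * Rabs D1 * / G2 * Q) with (X * Q) by (unfold X; ring).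
  change (D1 - (G1 - G0)) with D2.
  replace ((2 * Rabs D2 * / G1 + 2 * (1 + M) * Rabs D1 * (/ G1 * / G2)) * V)
    with (X * (2 * / G1 * V)) by (unfold X; ring).
  apply Rmult_le_compat_l; [lra|].
  replace Q with (2 * / G1 * (G1 / 2 * Q)) by (field; lra).
  apply Rmult_le_compat_l; [|exact Hlow].
  lra.
Qed.


Definition Vf g n w := g (S n) * (p g (S n) w ^2 + p g (S (S n)) w ^2)
  - w * p g (S n) w * p g (S (S n)) w - Defs.Delta g n * p g (S n) w ^2.
Definition Bf g n w := g n * ((p g n w)^2 + (p g (S n) w)^2).
Definition epsf g M := fun n => 2 * Rabs (Delta2 g n) * / g (S n)
  + 2 * (1 + M) * Rabs (Defs.Delta g (S n)) * (/ g (S n) * / g (S (S n))).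

Lemma ev g (h1 : cond1 g) (h2 : cond2 g) M :
  exists N, forall n, (N <= n)%nat -> Rabs (Defs.Delta g n) <= 1 /\ M + 2 <= g n.
Proof.
  destruct (h2 1) as [N1 HN1]; [lra|].
  destruct (h1 (M+2)) as [N2 HN2].
  exists (Nat.max N1 N2). intros n Hn.
  specialize (HN1 n ltac:(lia)). specialize (HN2 n ltac:(lia)).
  unfold R_dist in HN1. rewrite Rminus_0_r in HN1. lra.
Qed.

Lemma inv_half x y : 0 < x -> x / 2 <= y -> / y <= 2 * / x.
Proof.
  intros Hx Hy. replace (2 * / x) with (/ (x/2)) by (field; lra).
  apply Rinv_le_contravar; lra.
Qed.

Lemma V_step g (hpos : forall n, 0 < g n) (h1 : cond1 g) (h2 : cond2 g) M : 0 <= M ->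
  exists N, forall n w, (N <= n)%nat -> Rabs w <= M ->
  Rabs (Defs.Delta g n) <= 1 /\
  g (S n) / 2 * (p g (S n) w ^2 + p g (S (S n)) w ^2) <= Vf g n w /\
  Rabs (Vf g (S n) w - Vf g n w) <= epsf g M n * Vf g n w.
Proof.
  intros HM. destruct (ev g h1 h2 M) as [N HN]. exists N. intros n w Hn Hw.
  destruct (HN n Hn) as [D0 _]. destruct (HN (S n) ltac:(lia)) as [D1 G1].
  assert (Hc : M + 2 * Rabs (g (S n) - g n) <= g (S n)) by (unfold Defs.Delta in D0; lra).
  destruct (key_alg (g n) (g (S n)) (g (S (S n))) w (p g (S n) w) (p g (S (S n)) w) M
    HM (hpos _) (hpos _) Hw Hc D1) as [K1 K2].
  split; [exact D0|]. split.
  - unfold Vf, Defs.Delta. exact K1.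
  - unfold Vf, epsf, Delta2, Defs.Delta. rewrite (p_SS g w (S n)). exact K2.
Qed.

Lemma eps_nonneg g (hpos : forall n, 0 < g n) M n : 0 <= M -> 0 <= epsf g M n.
Proof.
  intro HM. unfold epsf.
  assert (A1 := hpos (S n)). assert (A2 := hpos (S (S n))).
  assert (0 < / g (S n)) by (apply Rinv_0_lt_compat; lra).
  assert (0 < / g (S (S n))) by (apply Rinv_0_lt_compat; lra).
  assert (0 <= Rabs (Delta2 g n)) by apply Rabs_pos.
  assert (0 <= Rabs (Defs.Delta g (S n))) by apply Rabs_pos.
  assert (0 <= 2 * Rabs (Delta2 g n) * / g (S n)) by (apply Rmult_le_pos; lra).
  assert (0 <= 2 * (1 + M) * Rabs (Defs.Delta g (S n))) by (apply Rmult_le_pos; [lra|]; lra).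
  assert (0 <= / g (S n) * / g (S (S n))) by (apply Rmult_le_pos; lra).
  assert (0 <= 2 * (1 + M) * Rabs (Defs.Delta g (S n)) * (/ g (S n) * / g (S (S n))))
    by (apply Rmult_le_pos; lra).
  lra.
Qed.

Lemma eps_TS g (hpos : forall n, 0 < g n) (h1 : cond1 g) (h2 : cond2 g)
  (h6 : cond6 g) (h7 : cond7 g) M : 0 <= M -> TS (epsf g M).
Proof.
  intro HM.
  destruct (ev g h1 h2 0) as [N HN].
  assert (Hhalf : forall n, (N <= n)%nat -> / g (S n) <= 2 * / g n).
  { intros n Hn. destruct (HN n Hn) as [D GG].
    apply inv_half; [apply hpos|]. unfold Defs.Delta in D.
    apply abs_between in D. lra. }
  assert (T1 : TS (fun n => 2 * Rabs (Delta2 g n) * / g (S n))).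
  { apply (TS_compare (fun n => Rabs (Delta2 g n) / g n) _ 4 0).
    - apply TS_of_conv; exact h7.
    - lra.
    - exists N. intros n Hn. rewrite Nat.add_0_r.
      assert (0 <= Rabs (Delta2 g n)) by apply Rabs_pos.
      assert (0 < / g (S n)) by (apply Rinv_0_lt_compat; apply hpos).
      split; [apply Rmult_le_pos; lra|].
      unfold Rdiv.
      assert (Rabs (Delta2 g n) * / g (S n) <= Rabs (Delta2 g n) * (2 * / g n))
        by (apply Rmult_le_compat_l; [lra| apply Hhalf; exact Hn]).
      lra. }
  assert (T2 : TS (fun n => 2 * (1 + M) * Rabs (Defs.Delta g (S n)) * (/ g (S n) * / g (S (S n))))).
  { apply (TS_compare (fun n => Rabs (Defs.Delta g n) / (g n)^2) _ (4 * (1 + M)) 1).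
    - apply TS_of_conv; exact h6.
    - lra.
    - exists N. intros n Hn. rewrite Nat.add_1_r.
      assert (0 <= Rabs (Defs.Delta g (S n))) by apply Rabs_pos.
      assert (0 < / g (S n)) by (apply Rinv_0_lt_compat; apply hpos).
      assert (0 < / g (S (S n))) by (apply Rinv_0_lt_compat; apply hpos).
      assert (H2 := Hhalf (S n) ltac:(lia)).
      assert (0 <= / g (S n) * / g (S (S n))) by (apply Rmult_le_pos; lra).
      split; [apply Rmult_le_pos; [apply Rmult_le_pos|]; lra|].
      assert (/ g (S n) * / g (S (S n)) <= / g (S n) * (2 * / g (S n)))
        by (apply Rmult_le_compat_l; lra).
      unfold Rdiv. replace (g (S n) ^ 2) with (g (S n) * g (S n)) by ring. rewrite Rinv_mult.
      assert (0 <= 2 * (1 + M) * Rabs (Defs.Delta g (S n))) by (apply Rmult_le_pos; lra).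
      assert (2 * (1 + M) * Rabs (Defs.Delta g (S n)) * (/ g (S n) * / g (S (S n)))
              <= 2 * (1 + M) * Rabs (Defs.Delta g (S n)) * (/ g (S n) * (2 * / g (S n))))
        by (apply Rmult_le_compat_l; lra).
      simpl in *. lra. }
  apply (TS_plus _ _ ); [| |exact T1|exact T2].
  - intro n. assert (0 <= Rabs (Delta2 g n)) by apply Rabs_pos.
    assert (0 < / g (S n)) by (apply Rinv_0_lt_compat; apply hpos).
    apply Rmult_le_pos; lra.
  - intro n. assert (0 <= Rabs (Defs.Delta g (S n))) by apply Rabs_pos.
    assert (0 < / g (S n)) by (apply Rinv_0_lt_compat; apply hpos).
    assert (0 < / g (S (S n))) by (apply Rinv_0_lt_compat; apply hpos).
    apply Rmult_le_pos; [apply Rmult_le_pos|apply Rmult_le_pos]; lra.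
Qed.


Lemma Rdiv_le_0_compat a b : 0 <= a -> 0 < b -> 0 <= a / b.
Proof. intros. unfold Rdiv. apply Rmult_le_pos; [lra| left; apply Rinv_0_lt_compat; lra]. Qed.

Lemma pbound g (hpos : forall n, 0 < g n) M : 0 <= M -> forall n,
  exists C, 0 <= C /\ forall w, Rabs w <= M -> Rabs (p g n w) <= C /\ Rabs (p g (S n) w) <= C.
Proof.
  intros HM n. induction n as [|n [C [HC IH]]].
  - assert (H0 := hpos 0%nat).
    exists (1 + M / g 0%nat). split.
    + assert (0 <= M / g 0%nat) by (apply Rdiv_le_0_compat; lra). lra.
    + intros w Hw. rewrite p_0, p_1. rewrite Rabs_R1.
      assert (0 <= M / g 0%nat) by (apply Rdiv_le_0_compat; lra).
      split; [lra|].
      unfold Rdiv. rewrite Rabs_mult, Rabs_inv, (Rabs_pos_eq (g 0%nat)) by lra.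
      assert (Rabs w * / g 0%nat <= M * / g 0%nat)
        by (apply Rmult_le_compat_r; [left; apply Rinv_0_lt_compat|]; lra).
      lra.
  - assert (Hn := hpos n). assert (Hn1 := hpos (S n)).
    set (C' := C + (M * C + g n * C) / g (S n)).
    assert (0 <= (M * C + g n * C) / g (S n)).
    { apply Rdiv_le_0_compat; [|lra].
      assert (0 <= M * C) by (apply Rmult_le_pos; lra).
      assert (0 <= g n * C) by (apply Rmult_le_pos; lra). lra. }
    exists C'. split; [unfold C'; lra|].
    intros w Hw. destruct (IH w Hw) as [I1 I2].
    split; [unfold C'; lra|].
    rewrite p_SS. unfold Rdiv. rewrite Rabs_mult, Rabs_inv, (Rabs_pos_eq (g (S n))) by lra.
    assert (Rabs (w * p g (S n) w - g n * p g n w) <= M * C + g n * C).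
    { unfold Rminus. eapply Rle_trans; [apply Rabs_triang|].
      rewrite Rabs_Ropp, !Rabs_mult, (Rabs_pos_eq (g n)) by lra.
      assert (Rabs w * Rabs (p g (S n) w) <= M * C)
        by (apply Rmult_le_compat; try apply Rabs_pos; lra).
      assert (g n * Rabs (p g n w) <= g n * C) by (apply Rmult_le_compat_l; lra).
      lra. }
    assert (Rabs (w * p g (S n) w - g n * p g n w) * / g (S n) <= (M * C + g n * C) * / g (S n))
      by (apply Rmult_le_compat_r; [left; apply Rinv_0_lt_compat|]; lra).
    unfold C', Rdiv in *. lra.
Qed.

Lemma sq_le a C : Rabs a <= C -> a ^ 2 <= C ^ 2.
Proof.
  intro H. rewrite <- pow2_abs. assert (0 <= Rabs a) by apply Rabs_pos.
  simpl. rewrite !Rmult_1_r. apply Rmult_le_compat; lra.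
Qed.

Lemma quad_bound a b w G D C M : Rabs a <= C -> Rabs b <= C -> Rabs w <= M -> 0 <= G ->
  Rabs (G * (a^2 + b^2) - w * a * b - D * a^2) <= G * (2 * C^2) + M * C^2 + Rabs D * C^2.
Proof.
  intros Ha Hb Hw HG.
  assert (0 <= Rabs a) by apply Rabs_pos. assert (0 <= Rabs b) by apply Rabs_pos.
  assert (Ha2 := sq_le a C Ha). assert (Hb2 := sq_le b C Hb).
  assert (0 <= a^2) by (rewrite <- pow2_abs; apply pow_le; lra).
  assert (0 <= b^2) by (rewrite <- pow2_abs; apply pow_le; lra).
  eapply Rle_trans; [apply abs3|].
  rewrite (Rabs_pos_eq (G * _)) by (apply Rmult_le_pos; lra).
  assert (G * (a^2+b^2) <= G * (2 * C^2)) by (apply Rmult_le_compat_l; lra).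
  assert (Rabs (w * a * b) <= M * C^2).
  { rewrite !Rabs_mult. simpl. rewrite Rmult_1_r.
    rewrite Rmult_assoc.
    apply Rmult_le_compat.
    - apply Rabs_pos.
    - apply Rmult_le_pos; apply Rabs_pos.
    - lra.
    - apply Rmult_le_compat; lra. }
  assert (Rabs (D * a^2) <= Rabs D * C^2).
  { rewrite Rabs_mult, (Rabs_pos_eq (a^2)) by lra.
    apply Rmult_le_compat_l; [apply Rabs_pos|lra]. }
  lra.
Qed.

Lemma Vf_bound g (hpos : forall n, 0 < g n) M : 0 <= M -> forall n,
  exists K, forall w, Rabs w <= M -> Vf g n w <= K.
Proof.
  intros HM n. destruct (pbound g hpos M HM (S n)) as [C [HC H]].
  eexists. intros w Hw. destruct (H w Hw) as [H1 H2].
  assert (Hg := hpos (S n)).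
  assert (Q := quad_bound _ _ w (g (S n)) (Defs.Delta g n) C M H1 H2 Hw ltac:(lra)).
  unfold Vf. eapply Rle_trans; [apply Rle_abs|]. exact Q.
Qed.

Lemma Bf_bound g (hpos : forall n, 0 < g n) M : 0 <= M -> forall n,
  exists K, forall w, Rabs w <= M -> Rabs (Bf g n w) <= K.
Proof.
  intros HM n. destruct (pbound g hpos M HM n) as [C [HC H]].
  eexists. intros w Hw. destruct (H w Hw) as [H1 H2].
  assert (Hg := hpos n).
  assert (Q := quad_bound _ _ 0 (g n) 0 C M H1 H2 ltac:(rewrite Rabs_R0; lra) ltac:(lra)).
  unfold Bf. replace (g n * (p g n w ^ 2 + p g (S n) w ^ 2))
    with (g n * (p g n w ^ 2 + p g (S n) w ^ 2) - 0 * p g n w * p g (S n) w - 0 * p g n w ^ 2) by ring.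
  exact Q.
Qed.


Lemma Q_nonneg a b : 0 <= a ^ 2 + b ^ 2.
Proof. simpl. rewrite !Rmult_1_r. assert (H1 := Rle_0_sqr a). assert (H2 := Rle_0_sqr b).
  unfold Rsqr in *. lra. Qed.

Lemma near_lemma (V e : nat -> R) m0 s0 Cb :
  (forall n, 0 <= e n) -> 0 <= s0 <= 1/2 ->
  (forall n, (m0 <= n)%nat -> 0 <= V n <= Cb /\ Rabs (V (S n) - V n) <= e n * V n) ->
  (forall k, psum e m0 k <= s0) ->
  forall n, (m0 <= n)%nat -> Rabs (V n - V m0) <= s0 * Cb.
Proof.
  intros He Hs HV Ht n Hn.
  assert (HV' : forall n, (m0 <= n)%nat -> 0 <= V n /\ Rabs (V (S n) - V n) <= e n * V n)
    by (intros j Hj; destruct (HV j Hj) as [[? ?] ?]; split; lra).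
  destruct (prod_iter V e m0 He HV' (n - m0) ltac:(specialize (Ht (n - m0)%nat); lra)) as [P1 P2].
  replace (m0 + (n - m0))%nat with n in P1, P2 by lia.
  assert (Hp := psum_nonneg e m0 (n - m0) He). assert (Ht1 := Ht (n - m0)%nat).
  set (s := psum e m0 (n - m0)) in *.
  destruct (HV n Hn) as [[A1 A2] _]. destruct (HV m0 (le_n _)) as [[B1 B2] _].
  assert (s * V n <= s0 * Cb) by (apply Rmult_le_compat; lra).
  assert (s * V m0 <= s0 * Cb) by (apply Rmult_le_compat; lra).
  unfold Rabs; destruct Rcase_abs; nra.
Qed.

Lemma V_unif g (hpos : forall n, 0 < g n) (h1 : cond1 g) (h2 : cond2 g)
  (h6 : cond6 g) (h7 : cond7 g) M : 0 <= M ->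
  exists N Cb, 0 <= Cb /\
   (forall n w, (N <= n)%nat -> Rabs w <= M ->
      Rabs (Defs.Delta g n) <= 1 /\
      g (S n) / 2 * (p g (S n) w ^2 + p g (S (S n)) w ^2) <= Vf g n w /\ Vf g n w <= Cb) /\
   (forall e, e > 0 -> exists N', forall n m w, (N' <= n)%nat -> (N' <= m)%nat -> Rabs w <= M ->
      Rabs (Vf g n w - Vf g m w) <= e).
Proof.
  intro HM.
  destruct (V_step g hpos h1 h2 M HM) as [N0 HN0].
  assert (HT := eps_TS g hpos h1 h2 h6 h7 M HM).
  assert (He := fun n => eps_nonneg g hpos M n HM).
  assert (Vpos : forall n w, (N0 <= n)%nat -> Rabs w <= M -> 0 <= Vf g n w).
  { intros n w Hn Hw. destruct (HN0 n w Hn Hw) as [_ [L _]].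
    assert (0 <= g (S n) / 2 * (p g (S n) w ^2 + p g (S (S n)) w ^2)).
    { apply Rmult_le_pos; [assert (Hg := hpos (S n)); lra | apply Q_nonneg]. }
    lra. }
  destruct (HT (1/2)) as [N1 HN1]; [lra|].
  set (N := Nat.max N0 N1).
  destruct (Vf_bound g hpos M HM N) as [K HK].
  set (Cb := 2 * Rmax K 0).
  assert (HCb : 0 <= Cb) by (unfold Cb; assert (H := Rmax_r K 0); lra).
  assert (Hup : forall n w, (N <= n)%nat -> Rabs w <= M -> Vf g n w <= Cb).
  { intros n w Hn Hw.
    assert (HV : forall j, (N <= j)%nat -> 0 <= Vf g j w /\
               Rabs (Vf g (S j) w - Vf g j w) <= epsf g M j * Vf g j w).
    { intros j Hj. split; [apply Vpos; [lia|exact Hw]|].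
      destruct (HN0 j w ltac:(lia) Hw) as [_ [_ D]]. exact D. }
    assert (Hs := HN1 N (n - N)%nat ltac:(lia)).
    destruct (prod_iter (fun j => Vf g j w) (epsf g M) N He HV (n - N) ltac:(lra)) as [_ P2].
    replace (N + (n - N))%nat with n in P2 by lia.
    assert (Hp := psum_nonneg (epsf g M) N (n - N) He).
    assert (HKw := HK w Hw). assert (HKm := Rmax_l K 0).
    assert (Vn := Vpos n w ltac:(lia) Hw).
    unfold Cb. simpl in P2. nra. }
  exists N, Cb. split; [exact HCb|]. split.
  - intros n w Hn Hw. destruct (HN0 n w ltac:(lia) Hw) as [D [L _]].
    split; [exact D|]. split; [exact L|]. apply Hup; assumption.
  - intros e Hepos.
    set (s0 := Rmin (1/2) (e / (2 * Cb + 1))).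
    assert (Hs0a : s0 <= 1/2) by apply Rmin_l.
    assert (Hs0b : s0 <= e / (2 * Cb + 1)) by apply Rmin_r.
    assert (Hs0c : 0 < s0).
    { unfold s0. apply Rmin_glb_lt; [lra|]. apply Rdiv_lt_0_compat; lra. }
    destruct (HT s0 Hs0c) as [N2 HN2].
    set (N' := Nat.max N N2). exists N'.
    assert (Hnear : forall n w, (N' <= n)%nat -> Rabs w <= M ->
               Rabs (Vf g n w - Vf g N' w) <= s0 * Cb).
    { intros n w Hn Hw.
      apply (near_lemma (fun j => Vf g j w) (epsf g M) N' s0 Cb He ltac:(lra)); [| |exact Hn].
      - intros j Hj. split; [split|].
        + apply Vpos; [lia|exact Hw].
        + apply Hup; [lia|exact Hw].
        + destruct (HN0 j w ltac:(lia) Hw) as [_ [_ D]]. exact D.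
      - intro k. apply HN2. lia. }
    intros n m w Hn Hm Hw.
    assert (A := Hnear n w Hn Hw). assert (B := Hnear m w Hm Hw).
    assert (s0 * Cb * (2 * Cb + 1) <= e * Cb).
    { assert (s0 * (2 * Cb + 1) <= e).
      { apply (Rmult_le_compat_r (2*Cb+1)) in Hs0b; [|lra].
        unfold Rdiv in Hs0b. rewrite Rmult_assoc, Rinv_l in Hs0b by lra. lra. }
      nra. }
    assert (2 * (s0 * Cb) <= e) by nra.
    unfold Rabs in *; repeat destruct Rcase_abs; lra.
Qed.


Lemma wab_bound w a b M : Rabs w <= M -> Rabs (w * a * b) <= M * (a^2 + b^2).
Proof.
  intro Hw. rewrite Rmult_assoc, Rabs_mult.
  assert (H := abs_ab a b). assert (0 <= Rabs (a*b)) by apply Rabs_pos.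
  assert (HQ := Q_nonneg a b).
  assert (Rabs w * Rabs (a*b) <= M * ((a^2+b^2)/2))
    by (apply Rmult_le_compat; try apply Rabs_pos; lra).
  assert (0 <= M) by (assert (0 <= Rabs w) by apply Rabs_pos; lra).
  assert (0 <= M * (a^2+b^2)) by (apply Rmult_le_pos; lra).
  lra.
Qed.

Lemma B_unif g (hpos : forall n, 0 < g n) (h1 : cond1 g) (h2 : cond2 g)
  (h6 : cond6 g) (h7 : cond7 g) M : 0 <= M ->
  forall e, e > 0 -> exists N, forall n m w, (N <= n)%nat -> (N <= m)%nat -> Rabs w <= M ->
      Rabs (Bf g n w - Bf g m w) <= e.
Proof.
  intros HM e He.
  destruct (V_unif g hpos h1 h2 h6 h7 M HM) as [N [Cb [HCb [Hb Hc]]]].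
  destruct (Hc (e/3)) as [N' HN']; [lra|].
  destruct (h1 (6 * (M + 1) * Cb / e)) as [N3 HN3].
  assert (Hd : forall n w, (Nat.max (Nat.max N N') N3 <= n)%nat -> Rabs w <= M ->
             Rabs (Bf g (S n) w - Vf g n w) <= e / 3).
  { intros n w Hn Hw.
    destruct (Hb n w ltac:(lia) Hw) as [D [L U]].
    assert (G := HN3 (S n) ltac:(lia)).
    assert (Hg := hpos (S n)).
    set (a := p g (S n) w) in *. set (b := p g (S (S n)) w) in *.
    assert (HQ := Q_nonneg a b).
    replace (Bf g (S n) w - Vf g n w) with (w * a * b + Defs.Delta g n * a^2)
      by (unfold Bf, Vf, a, b; ring).
    assert (H1 := wab_bound w a b M Hw).
    assert (H2 : Rabs (Defs.Delta g n * a^2) <= a^2 + b^2).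
    { rewrite Rabs_mult, (Rabs_pos_eq (a^2)) by (rewrite <- pow2_abs; apply pow_le; apply Rabs_pos).
      assert (0 <= a^2) by (rewrite <- pow2_abs; apply pow_le; apply Rabs_pos).
      assert (0 <= b^2) by (rewrite <- pow2_abs; apply pow_le; apply Rabs_pos).
      assert (Rabs (Defs.Delta g n) * a^2 <= 1 * a^2) by (apply Rmult_le_compat_r; lra). lra. }
    assert (Hsum : Rabs (w * a * b + Defs.Delta g n * a ^ 2) <= (M + 1) * (a^2 + b^2))
      by (eapply Rle_trans; [apply Rabs_triang|]; lra).
    eapply Rle_trans; [exact Hsum|].
    set (Q := a^2 + b^2) in *.
    assert (HQg : Q * g (S n) <= 2 * Cb) by lra.
    assert (HG : 6 * (M + 1) * Cb <= e * g (S n)).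
    { unfold Rdiv in G. apply (Rmult_lt_compat_r e) in G; [|lra].
      rewrite Rmult_assoc, Rinv_l in G by lra. lra. }
    apply (Rmult_le_reg_r (g (S n))); [lra|].
    assert ((M + 1) * Q * g (S n) <= (M+1) * (2 * Cb)).
    { rewrite Rmult_assoc. apply Rmult_le_compat_l; lra. }
    lra. }
  exists (S (Nat.max (Nat.max N N') N3)).
  intros n m w Hn Hm Hw.
  destruct n as [|n]; [lia|]. destruct m as [|m]; [lia|].
  assert (A1 := Hd n w ltac:(lia) Hw). assert (A2 := Hd m w ltac:(lia) Hw).
  assert (A3 := HN' n m w ltac:(lia) ltac:(lia) Hw).
  unfold Rabs in *; repeat destruct Rcase_abs; lra.
Qed.


Lemma lim_le u l c e N : Un_cv u l -> (forall m, (N <= m)%nat -> Rabs (u m - c) <= e) ->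
  Rabs (l - c) <= e.
Proof.
  intros Hl Hm. destruct (Rle_lt_dec (Rabs (l - c)) e) as [H|H]; [exact H|].
  exfalso. destruct (Hl (Rabs (l - c) - e)) as [N' HN']; [lra|].
  specialize (HN' (Nat.max N N') ltac:(lia)). specialize (Hm (Nat.max N N') ltac:(lia)).
  unfold R_dist in HN'.
  set (x := u (Nat.max N N')) in *.
  unfold Rabs in *; repeat destruct Rcase_abs; lra.
Qed.

Lemma fin_bound (f : nat -> R -> R) (P : R -> Prop) :
  (forall k, exists C, forall w, P w -> f k w <= C) ->
  forall N, exists C, forall k w, (k <= N)%nat -> P w -> f k w <= C.
Proof.
  intros H N. induction N as [|N [C IH]].
  - destruct (H 0%nat) as [C HC]. exists C. intros k w Hk Hw.
    replace k with 0%nat by lia. auto.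
  - destruct (H (S N)) as [C' HC']. exists (Rmax C C'). intros k w Hk Hw.
    destruct (Nat.eq_dec k (S N)) as [->|Hne].
    + eapply Rle_trans; [apply HC'; exact Hw| apply Rmax_r].
    + eapply Rle_trans; [apply IH; [lia|exact Hw]| apply Rmax_l].
Qed.

Lemma D_pos g (hpos : forall n, 0 < g n) n : 0 < sum_f_R0 (fun k => / g k) n.
Proof.
  induction n; simpl.
  - apply Rinv_0_lt_compat, hpos.
  - assert (0 < / g (S n)) by apply Rinv_0_lt_compat, hpos. lra.
Qed.

Lemma sum_bound g (hpos : forall n, 0 < g n) (t : nat -> R) e c N : 0 <= e -> 0 <= c ->
  (forall k, (N <= k)%nat -> Rabs (t k) <= e * / g k) -> (forall k, Rabs (t k) <= c) ->
  forall n, Rabs (sum_f_R0 t n) <= e * sum_f_R0 (fun k => / g k) n + INR N * c.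
Proof.
  intros He Hc H1 H2 n.
  assert (Hs : Rabs (sum_f_R0 t n) <= e * sum_f_R0 (fun k => / g k) n + INR (Nat.min (S n) N) * c).
  { induction n; simpl sum_f_R0.
    - destruct N as [|N].
      + simpl. specialize (H1 0%nat ltac:(lia)). lra.
      + replace (Nat.min 1 (S N)) with 1%nat by lia. simpl.
        assert (0 <= e * / g 0%nat) by (apply Rmult_le_pos; [lra| left; apply Rinv_0_lt_compat, hpos]).
        specialize (H2 0%nat). lra.
    - eapply Rle_trans; [apply Rabs_triang|].
      assert (Hi : 0 <= e * / g (S n)) by (apply Rmult_le_pos; [lra| left; apply Rinv_0_lt_compat, hpos]).
      destruct (Nat.le_gt_cases N (S n)) as [HN|HN].
      + replace (Nat.min (S (S n)) N) with (Nat.min (S n) N) by lia.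
        specialize (H1 (S n) HN). rewrite Rmult_plus_distr_l. lra.
      + replace (Nat.min (S (S n)) N) with (S (Nat.min (S n) N)) by lia.
        rewrite S_INR. specialize (H2 (S n)). rewrite Rmult_plus_distr_l. lra. }
  assert (INR (Nat.min (S n) N) <= INR N) by (apply le_INR; lia).
  assert (INR (Nat.min (S n) N) * c <= INR N * c) by (apply Rmult_le_compat_r; lra).
  lra.
Qed.

Lemma A_identity g (hpos : forall n, 0 < g n) w L n :
  2 * sum_f_R0 (fun k => (p g k w) ^ 2) n - L * sum_f_R0 (fun k => / g k) n
  = sum_f_R0 (fun k => (Bf g k w - L) * / g k) n + 1 - (p g (S n) w) ^ 2.
Proof.
  induction n.
  - simpl. unfold Bf. rewrite p_0. assert (H := hpos 0%nat). field. lra.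
  - rewrite !tech5. assert (H := hpos (S n)).
    assert (E : (Bf g (S n) w - L) * / g (S n) = p g (S n) w ^ 2 + p g (S (S n)) w ^ 2 - L * / g (S n))
      by (unfold Bf; field; lra).
    rewrite E. lra.
Qed.


Lemma B_to_L g (hpos : forall n, 0 < g n) (h1 : cond1 g) (h2 : cond2 g)
  (h6 : cond6 g) (h7 : cond7 g) (LB : R -> R)
  (HLB : forall w, Un_cv (fun n => Bf g n w) (LB w)) M : 0 <= M ->
  forall e, e > 0 -> exists N, forall n w, (N <= n)%nat -> Rabs w <= M ->
    Rabs (Bf g n w - LB w) <= e.
Proof.
  intros HM e He. destruct (B_unif g hpos h1 h2 h6 h7 M HM e He) as [N HN].
  exists N. intros n w Hn Hw.
  rewrite Rabs_minus_sym.
  apply (lim_le _ _ _ _ N (HLB w)). intros m Hm. apply HN; assumption.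
Qed.

Lemma A_unif g (hpos : forall n, 0 < g n) (h1 : cond1 g) (h2 : cond2 g) (h4 : cond4 g)
  (h6 : cond6 g) (h7 : cond7 g) (LB : R -> R)
  (HLB : forall w, Un_cv (fun n => Bf g n w) (LB w)) M : 0 <= M ->
  unif_cv_on (fun x => Rabs x <= M)
    (fun n w => sum_f_R0 (fun k => (p g k w) ^ 2) n / sum_f_R0 (fun k => / g k) n)
    (fun w => / 2 * LB w).
Proof.
  intros HM.
  destruct (B_unif g hpos h1 h2 h6 h7 M HM 1 ltac:(lra)) as [N1 HN1].
  destruct (Bf_bound g hpos M HM N1) as [K1 HK1].
  destruct (fin_bound (fun k w => Rabs (Bf g k w)) (fun w => Rabs w <= M)
              (fun k => Bf_bound g hpos M HM k) N1) as [K2 HK2].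
  set (Bb := Rmax K2 (K1 + 1)).
  assert (HBb : forall n w, Rabs w <= M -> Rabs (Bf g n w) <= Bb).
  { intros n w Hw. destruct (Nat.le_gt_cases N1 n) as [Hn|Hn].
    - specialize (HN1 n N1 w Hn (le_n _) Hw). specialize (HK1 w Hw).
      assert (Rabs (Bf g n w) <= K1 + 1) by (unfold Rabs in *; repeat destruct Rcase_abs; lra).
      eapply Rle_trans; [exact H| apply Rmax_r].
    - eapply Rle_trans; [apply HK2; [lia|exact Hw]| apply Rmax_l]. }
  destruct (h1 1) as [Ng HNg].
  destruct (fin_bound (fun k (_ : R) => / g k) (fun _ => True)
              (fun k => ex_intro (fun C => forall w : R, True -> / g k <= C) (/ g k) (fun w _ => Rle_refl _)) Ng) as [K3 HK3].
  set (Gb := Rmax K3 1).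
  assert (HGb : forall n, / g n <= Gb).
  { intro n. destruct (Nat.le_gt_cases Ng n) as [Hn|Hn].
    - specialize (HNg n Hn). assert (/ g n < / 1) by (apply Rinv_lt_contravar; lra).
      rewrite Rinv_1 in H. assert (H' := Rmax_r K3 1). unfold Gb; lra.
    - eapply Rle_trans; [apply (HK3 n 0); [lia|exact I]| apply Rmax_l]. }
  assert (HGb0 : 0 <= Gb) by (unfold Gb; assert (H' := Rmax_r K3 1); lra).
  assert (HBb0 : 0 <= Bb) by (assert (H := HBb 0%nat 0 ltac:(rewrite Rabs_R0; lra));
                              assert (0 <= Rabs (Bf g 0 0)) by apply Rabs_pos; lra).
  assert (HLBb : forall w, Rabs w <= M -> Rabs (LB w) <= Bb).
  { intros w Hw. replace (LB w) with (LB w - 0) by ring.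
    apply (lim_le _ _ _ _ 0 (HLB w)). intros m _. rewrite Rminus_0_r. apply HBb; exact Hw. }
  set (c := 2 * Bb * Gb).
  assert (Hc0 : 0 <= c) by (unfold c; apply Rmult_le_pos; lra).
  intros eps Heps.
  destruct (B_to_L g hpos h1 h2 h6 h7 LB HLB M HM (eps / 2) ltac:(lra)) as [N HN].
  set (K := INR N * c + 1 + Bb * Gb).
  assert (HK0 : 0 <= K).
  { unfold K. assert (0 <= INR N) by apply pos_INR.
    assert (0 <= INR N * c) by (apply Rmult_le_pos; lra).
    assert (0 <= Bb * Gb) by (apply Rmult_le_pos; lra). lra. }
  destruct (h4 (2 * K / eps)) as [N4 HN4].
  exists (Nat.max N N4). intros n w Hn Hw.
  set (D := sum_f_R0 (fun k => / g k) n).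
  assert (HD : 0 < D) by apply D_pos, hpos.
  assert (HDK : 2 * K < eps * D).
  { specialize (HN4 n ltac:(lia)). fold D in HN4.
    apply (Rmult_lt_compat_l eps) in HN4; [|lra].
    unfold Rdiv in HN4. rewrite <- Rmult_assoc, (Rmult_comm eps (2 * K)), Rmult_assoc,
      Rinv_r, Rmult_1_r in HN4 by lra. exact HN4. }
  set (t := fun k => (Bf g k w - LB w) * / g k).
  assert (Ht1 : forall k, (N <= k)%nat -> Rabs (t k) <= eps / 2 * / g k).
  { intros k Hk. unfold t. rewrite Rabs_mult, (Rabs_pos_eq (/ g k))
      by (left; apply Rinv_0_lt_compat, hpos).
    apply Rmult_le_compat_r; [left; apply Rinv_0_lt_compat, hpos|]. apply HN; assumption. }
  assert (Ht2 : forall k, Rabs (t k) <= c).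
  { intro k. unfold t, c. rewrite Rabs_mult, (Rabs_pos_eq (/ g k))
      by (left; apply Rinv_0_lt_compat, hpos).
    assert (Rabs (Bf g k w - LB w) <= 2 * Bb).
    { unfold Rminus. eapply Rle_trans; [apply Rabs_triang|]. rewrite Rabs_Ropp.
      assert (H1 := HBb k w Hw). assert (H2 := HLBb w Hw). lra. }
    assert (0 < / g k) by apply Rinv_0_lt_compat, hpos.
    apply Rmult_le_compat; [apply Rabs_pos|lra|lra|apply HGb]. }
  assert (HS := sum_bound g hpos t (eps/2) c N ltac:(lra) Hc0 Ht1 Ht2 n). fold D in HS.
  assert (Hid := A_identity g hpos w (LB w) n). fold D in Hid. fold t in Hid.
  assert (Hp : p g (S n) w ^ 2 <= Bb * Gb).
  { assert (HB := HBb n w Hw). assert (Hg := hpos n).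
    assert (Hpn : 0 <= p g n w ^ 2) by (rewrite <- pow2_abs; apply pow_le, Rabs_pos).
    assert (Hpn1 : 0 <= p g (S n) w ^ 2) by (rewrite <- pow2_abs; apply pow_le, Rabs_pos).
    assert (E : p g n w ^ 2 + p g (S n) w ^ 2 = Bf g n w * / g n) by (unfold Bf; field; lra).
    assert (Bf g n w * / g n <= Bb * Gb).
    { apply Rmult_le_compat; [|left; apply Rinv_0_lt_compat; lra| |apply HGb].
      - unfold Bf; apply Rmult_le_pos; lra.
      - eapply Rle_trans; [apply Rle_abs|exact HB]. }
    lra. }
  assert (Hp0 : 0 <= p g (S n) w ^ 2) by (rewrite <- pow2_abs; apply pow_le, Rabs_pos).
  unfold R_dist.
  set (Sp := sum_f_R0 (fun k => p g k w ^ 2) n) in *.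
  set (St := sum_f_R0 t n) in *.
  replace (Sp / D - / 2 * LB w) with ((St + 1 - p g (S n) w ^ 2) * / (2 * D))
    by (field_simplify_eq; [lra| lra]).
  rewrite Rabs_mult, (Rabs_pos_eq (/ (2 * D))) by (left; apply Rinv_0_lt_compat; lra).
  assert (HX : Rabs (St + 1 - p g (S n) w ^ 2) <= eps / 2 * D + K).
  { unfold K. unfold Rminus. eapply Rle_trans; [apply Rabs_triang|].
    rewrite Rabs_Ropp, (Rabs_pos_eq (p g (S n) w ^ 2)) by lra.
    assert (Rabs (St + 1) <= Rabs St + 1) by (eapply Rle_trans; [apply Rabs_triang| rewrite Rabs_R1; lra]).
    lra. }
  apply (Rmult_lt_reg_r (2 * D)); [lra|].
  rewrite Rmult_assoc, Rinv_l by lra. lra.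
Qed.


Theorem corollary3 (g : nat -> R) (hpos : forall n, 0 < g n)
  (h1 : cond1 g) (h2 : cond2 g) (h3 : cond3 g) (h4 : cond4 g) (h5 : cond5 g) (h6 : cond6 g) (h7 : cond7 g) :
  let A := fun n w => sum_f_R0 (fun k => (p g k w) ^ 2) n
                      / sum_f_R0 (fun k => / g k) n in
  let B := fun n w => g n * ((p g n w) ^ 2 + (p g (S n) w) ^ 2) in
  exists LA LB : R -> R,
    (forall w, Un_cv (fun n => A n w) (LA w)) /\
    (forall w, Un_cv (fun n => B n w) (LB w)) /\
    (forall w, LA w = / 2 * LB w) /\
    (forall K : R -> Prop, compact K -> unif_cv_on K A LA /\ unif_cv_on K B LB).
Proof.
  intros A B.
  assert (HC : forall w, Cauchy_crit (fun n => Bf g n w)).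
  { intros w e He.
    destruct (B_unif g hpos h1 h2 h6 h7 (Rabs w) (Rabs_pos w) (e/2) ltac:(lra)) as [N HN].
    exists N. intros n m Hn Hm. unfold R_dist.
    assert (H := HN n m w Hn Hm (Rle_refl _)). lra. }
  set (LB := fun w => proj1_sig (R_complete _ (HC w))).
  assert (HLB : forall w, Un_cv (fun n => Bf g n w) (LB w)).
  { intro w. unfold LB. exact (proj2_sig (R_complete _ (HC w))). }
  assert (UB : forall M, 0 <= M -> unif_cv_on (fun x => Rabs x <= M) B LB).
  { intros M HM e He.
    destruct (B_to_L g hpos h1 h2 h6 h7 LB HLB M HM (e/2) ltac:(lra)) as [N HN].
    exists N. intros n x Hn Hx. assert (H := HN n x Hn Hx). unfold B. fold (Bf g n x). lra. }
  assert (UA : forall M, 0 <= M -> unif_cv_on (fun x => Rabs x <= M) A (fun w => / 2 * LB w)).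
  { intros M HM. exact (A_unif g hpos h1 h2 h4 h6 h7 LB HLB M HM). }
  assert (pw : forall (f : nat -> R -> R) L,
            (forall M, 0 <= M -> unif_cv_on (fun x => Rabs x <= M) f L) ->
            forall w, Un_cv (fun n => f n w) (L w)).
  { intros f L H w e He. destruct (H (Rabs w) (Rabs_pos w) e He) as [N HN].
    exists N. intros n Hn. unfold R_dist. apply HN; [exact Hn| apply Rle_refl]. }
  assert (cpt : forall (f : nat -> R -> R) L K,
            (forall M, 0 <= M -> unif_cv_on (fun x => Rabs x <= M) f L) ->
            compact K -> unif_cv_on K f L).
  { intros f L K H HK. destruct (compact_P1 K HK) as [m [M' HmM]].
    intros e He. destruct (H (Rabs m + Rabs M') ltac:(assert (H1 := Rabs_pos m); assert (H2 := Rabs_pos M'); lra) e He) as [N HN].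
    exists N. intros n x Hn Hx. apply HN; [exact Hn|].
    destruct (HmM x Hx).
    unfold Rabs; repeat destruct Rcase_abs; lra. }
  exists (fun w => / 2 * LB w), LB.
  split; [apply pw; exact UA|].
  split; [apply pw; exact UB|].
  split; [intro; reflexivity|].
  intros K HK. split; apply cpt; assumption.
Qed.
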